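(* Let $\mathfrak R$ be either a cubical iterated graph system $\mathfrak R\subseteq\mathfrak R(d_*,L_*,s_* )$ (with $L_*$ its parameter), or the Sierpiński gasket or pentagonal Sierpiński carpet iterated graph system (with $L_*:=2$), and let $G_m$ be its replacement graphs. Then for all types $t$ of $\mathfrak R$ and all $m\in\mathbb N$, \[ d_{G_m}\!\left(I_{t,-}^{(m)},I_{t,+}^{(m)}\right)\ge\frac12\cdot L_*^m, \] where $I_{t,\star}^{(m)}:=(I_{t,\star})^m\subseteq W_m$ and $d_{G_m}(A,B)=\min\{d_{G_m}(a,b):a\in A,b\in B\}$.
   Context: Graphs: $(V,E)$, $V$ finite non-empty, $E\subseteq V\times V$, $(x,y)\in E\Rightarrow(y,x)\notin E$; $d_G$ is the shortest-path metric in the underlying undirected graph. An iterated graph system (IGS) $\mathfrak R$ consists of a connected graph $G_1=(S,E)$, a finite set $\mathcal T$ of types, a surjective typing $\mathfrak t:E\to\mathcal T$ and non-empty gluing rules $I_t\subseteq S\times S$; $I_{t,+}=\{w:(w,v)\in I_t\text{ for some }v\}$ and $I_{t,-}=\{v:(w,v)\in I_t\text{ for some }w\}$. With $W_m=S^m$, $[w]_k=w_1\cdots w_k$, the replacement graphs $G_m=(W_m,E_m)$ are defined recursively: $(w,v)\in E_{m+1}$ iff either (1) $[w]_m=[v]_m$ and $(w_{m+1},v_{m+1})\in E$ (type $\mathfrak t(w_{m+1},v_{m+1})$), or (2) $([w]_m,[v]_m)\in E_m$ and $(w_{m+1},v_{m+1})\in I_{\mathfrak t([w]_m,[v]_m)}$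 (type $\mathfrak t([w]_m,[v]_m)$). Mapping of IGS $\varphi:\mathfrak R\to\mathfrak R'$: graph mapping $G_1\to G_1'$ (edges to edges or collapsed) with (i) if $\varphi(w_1)=\varphi(v_1)$ for an edge $\{w_1,v_1\}$ of type $t$ then $\varphi(w_2)=\varphi(v_2)$ for all $(w_2,v_2)\in I_t$; (ii) if $(w_1,v_1)\in E$ has type $t$ and $(\varphi(w_1),\varphi(v_1))\in E'$ has type $t'$ then $(\varphi(w_2),\varphi(v_2))\in I'_{t'}$ for all $(w_2,v_2)\in I_t$; (iii) if $(w_1,v_1)\in E$ has type $t$ and $(\varphi(v_1),\varphi(w_1))\in E'$ has type $t'$ then $(\varphi(v_2),\varphi(w_2))\in I'_{t'}$ for all $(w_2,v_2)\in I_t$. Isomorphism of IGS: graph isomorphism with it and its inverse mappings of IGS; sub-system: $S\subseteq S'$, same types, inclusion a mapping of IGS. Cubical IGS: for integers $d_*\ge1,s_*\ge1,L_*\ge3$, $\mathfrak R(d_*,L_*,s_* )$ has symbols $\{1,\dots,L_*\}^{d_*}\times\{\underline1,\dots,\underline{s_*}\}$ with coordinates $c_i$ and sheet $s$; types $t_1,\dots,t_{d_*}$; $(w,v)$ is an edge of type $t_j$ iff $c_i(v)=c_i(w)$ ($i\ne j$), $c_j(v)=c_j(w)+1$; $(w,v)\in I_{t_j}$ iff $c_i(w)=c_i(v)$ ($i\ne j$), $(c_j(w),c_j(v))=(L_*,1)$, $s(w)=s(v)$. Sheet- and other-coordinate-preserving maps: $\eta_j:c_j\mapsto L_*+1-c_j$;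 $\alpha^+_{j,k}$ ($j\ne k$) swaps $c_j,c_k$; $\alpha^-_{j,k}$: $c_k\mapsto L_*+1-c_j$, $c_j\mapsto L_*+1-c_k$; $\mathcal G$ the set of these. A cubical IGS is a sub-system $\mathfrak R\subseteq\mathfrak R(d_*,L_*,s_* )$ with (C1) for each $j$, every symbol with $c_i\in\{1,L_*\}$ for all $i\ne j$ and sheet $\underline1$ (condition $(\ast_j)$) is in $S(\mathfrak R)$; (C2) if $w,v$ satisfy $(\ast_j)$, agree off coordinate $j$, and $c_j(v)=c_j(w)+1$, then $(w,v)\in E(\mathfrak R)$; (C3) if $w,v$ satisfy $(\ast_j)$, agree off coordinate $j$, and $(c_j(w),c_j(v))=(L_*,1)$, then $(w,v)\in I_{t_j}(\mathfrak R)$; (C4) each $\alpha\in\mathcal G$ restricts to an isomorphism of IGS $\mathfrak R\to\mathfrak R$. Sierpiński gasket: $S=\{0,1,2\}$, $E=\{(0,1),(1,2),(0,2)\}$ of types $a,b,c$, $I_a=\{(1,0)\}$, $I_b=\{(2,1)\}$, $I_c=\{(2,0)\}$. Pentagonal Sierpiński carpet: $S=\{0,\dots,4\}$, $E=\{(0,1),(1,2),(2,3),(3,4),(4,0)\}$ of types $a,b,c,d,e$, $I_a=\{(1,0),(2,4)\}$, $I_b=\{(2,1),(3,0)\}$, $I_c=\{(3,2),(4,1)\}$, $I_d=\{(4,3),(0,2)\}$, $I_e=\{(0,4),(1,3)\}$. *)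

(* Defs.v *)
From mathcomp Require Import all_boot.
Set Implicit Arguments.
Unset Strict Implicit.
Unset Printing Implicit Defensive.

(* Iterated graph systems.  An IGS lives on an ambient finite type A   *)
(* of "potential symbols"; its actual symbol set is [sym R] : {set A}. *)
(* Types form a finite type T.  [edge] is the edge relation E of G_1,  *)
(* [typ] the typing (only its values on edges matter), [glue t] = I_t. *)
Record igs (A T : finType) := IGS {
  sym  : {set A};
  edge : rel A;
  typ  : A -> A -> T;
  glue : T -> rel A
}.

Section IGS.
Variables (A T : finType).
Implicit Types R : igs A T.

Definition uadj1 R : rel A :=
  fun x y => [&& x \in sym R, y \in sym R & (edge R x y || edge R y x)].

Definition is_igs R : Prop :=
  [/\ sym R != set0,
      (forall x y, edge R x y -> (x \in sym R) && (y \in sym R)) /\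
      (forall t x y, glue R t x y -> (x \in sym R) && (y \in sym R)) /\
      (forall x y, edge R x y -> ~~ edge R y x),
      (forall x y, x \in sym R -> y \in sym R -> connect (uadj1 R) x y),
      (forall t : T, exists w v, edge R w v /\ typ R w v = t) &
      (forall t : T, exists w v, glue R t w v)].

(* type of the edge (w,v) of G_m (None if not an edge), on REVERSED
   words: the head of the list is the last letter w_m. *)
Fixpoint rtype R (w v : seq A) : option T :=
  match w, v with
  | a :: w', b :: v' =>
      if w' == v' then (if edge R a b then Some (typ R a b) else None)
      else match rtype R w' v' with
           | Some t => if glue R t a b then Some t else None
           | None => None
           end
  | _, _ => None
  end.

(* words w = w_1 ... w_m are lists [:: w_1; ...; w_m] *)
Definition Wm R (m : nat) : pred (seq A) :=
  fun w => (size w == m) && all (fun x => x \in sym R) w.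

(* (w,v) is an edge of G_m (the size m is checked by Wm) *)
Definition Gedge R : rel (seq A) := fun w v => rtype R (rev w) (rev v) != None.

Definition Gadj R (m : nat) : rel (seq A) :=
  fun w v => [&& w \in Wm R m, v \in Wm R m & (Gedge R w v || Gedge R v w)].

Definition Iplus R (t : T) : pred A := fun w => [exists v, glue R t w v].
Definition Iminus R (t : T) : pred A := fun v => [exists w, glue R t w v].

Definition Ipow (P : pred A) (m : nat) : pred (seq A) :=
  fun w => (size w == m) && all P w.

(* d_{G_m}(I_{t,-}^{(m)}, I_{t,+}^{(m)}) >= L^m / 2, i.e. every path in
   the underlying undirected graph of G_m from a point of I_{t,-}^{(m)}
   to a point of I_{t,+}^{(m)} has length n with 2 n >= L^m. *)
Definition dist_bound R (L : nat) : Prop :=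
  forall (t : T) (m : nat), 1 <= m ->
  forall (a b : seq A) (p : seq (seq A)),
    a \in Ipow (Iminus R t) m -> b \in Ipow (Iplus R t) m ->
    path (Gadj R m) a p -> last a p = b ->
    L ^ m <= 2 * size p.

End IGS.

Definition igs_map (A T A' T' : finType) (R : igs A T) (R' : igs A' T')
    (f : A -> A') : Prop :=
  [/\ {in sym R, forall x, f x \in sym R'},
      (forall w v, edge R w v ->
         f w = f v \/ edge R' (f w) (f v) \/ edge R' (f v) (f w)),
      (forall w1 v1, edge R w1 v1 -> f w1 = f v1 ->
         forall w2 v2, glue R (typ R w1 v1) w2 v2 -> f w2 = f v2),
      (forall w1 v1, edge R w1 v1 -> edge R' (f w1) (f v1) ->
         forall w2 v2, glue R (typ R w1 v1) w2 v2 ->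
           glue R' (typ R' (f w1) (f v1)) (f w2) (f v2)) &
      (forall w1 v1, edge R w1 v1 -> edge R' (f v1) (f w1) ->
         forall w2 v2, glue R (typ R w1 v1) w2 v2 ->
           glue R' (typ R' (f v1) (f w1)) (f v2) (f w2))].

Definition igs_iso (A T A' T' : finType) (R : igs A T) (R' : igs A' T')
    (f : A -> A') : Prop :=
  exists g : A' -> A,
    [/\ {in sym R, forall x, f x \in sym R'} /\
        {in sym R', forall y, g y \in sym R},
        {in sym R, forall x, g (f x) = x} /\
        {in sym R', forall y, f (g y) = y},
        {in sym R &, forall x y, uadj1 R' (f x) (f y) = uadj1 R x y},
        igs_map R R' f & igs_map R' R g].

Definition subsystem (A T : finType) (R R' : igs A T) : Prop :=
  sym R \subset sym R' /\ igs_map R R' id.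

(* Cubical IGS R(d_star, L_star, s_star).  Convention: d_star = d.+1, s_star = s.+1   *)
(* (so d_star >= 1, s_star >= 1 automatically); coordinates 1..L_star are      *)
(* represented by 'I_L (value k stands for k+1), sheets 1..s_star by      *)
(* 'I_s.+1 (sheet \underline 1 is value 0).  Type t_j is j : 'I_d.+1.  *)
Section Cube.
Variables (d L s : nat).

Definition csym := ({ffun 'I_d.+1 -> 'I_L} * 'I_s.+1)%type.
Definition cc (x : csym) (i : 'I_d.+1) : nat := x.1 i.
Definition sheet (x : csym) : nat := x.2.

Definition cedge_j (j : 'I_d.+1) (w v : csym) : bool :=
  [forall i, (i != j) ==> (cc v i == cc w i)] && (cc v j == (cc w j).+1).

Definition cglue_j (j : 'I_d.+1) (w v : csym) : bool :=
  [&& [forall i, (i != j) ==> (cc w i == cc v i)],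
      (cc w j == L.-1), (cc v j == 0) & (sheet w == sheet v)].

Definition ctyp (w v : csym) : 'I_d.+1 :=
  odflt ord0 [pick j | cedge_j j w v].

Definition Rcube : igs csym 'I_d.+1 :=
  {| sym := setT;
     edge := fun w v => [exists j, cedge_j j w v];
     typ := ctyp;
     glue := cglue_j |}.

Definition star_j (j : 'I_d.+1) (x : csym) : bool :=
  [forall i, (i != j) ==> ((cc x i == 0) || (cc x i == L.-1))] && (sheet x == 0).

Definition agree_off (j : 'I_d.+1) (w v : csym) : bool :=
  [forall i, (i != j) ==> (cc w i == cc v i)].

Definition eta_j (j : 'I_d.+1) (x : csym) : csym :=
  ([ffun i => if i == j then rev_ord (x.1 i) else x.1 i], x.2).
Definition alpha_plus (j k : 'I_d.+1) (x : csym) : csym :=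
  ([ffun i => if i == j then x.1 k else if i == k then x.1 j else x.1 i], x.2).
Definition alpha_minus (j k : 'I_d.+1) (x : csym) : csym :=
  ([ffun i => if i == k then rev_ord (x.1 j)
              else if i == j then rev_ord (x.1 k) else x.1 i], x.2).

Definition cubical (R : igs csym 'I_d.+1) : Prop :=
  [/\ is_igs R /\ subsystem R Rcube,
      (forall j x, star_j j x -> x \in sym R),
      (forall j w v, star_j j w -> star_j j v -> agree_off j w v ->
         cc v j = (cc w j).+1 -> edge R w v),
      (forall j w v, star_j j w -> star_j j v -> agree_off j w v ->
         cc w j = L.-1 -> cc v j = 0 -> glue R j w v) &
      [/\ (forall j, igs_iso R R (eta_j j)),
          (forall j k, j != k -> igs_iso R R (alpha_plus j k)) &
          (forall j k, j != k -> igs_iso R R (alpha_minus j k))]].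

End Cube.

(* Sierpinski gasket: S = {0,1,2}, types a,b,c = 0,1,2.                *)
Definition gasket_edge (x y : 'I_3) : bool :=
  match nat_of_ord x, nat_of_ord y with
  | 0, 1 | 1, 2 | 0, 2 => true | _, _ => false end.
Definition gasket_typ (x y : 'I_3) : 'I_3 :=
  match nat_of_ord x, nat_of_ord y with
  | 0, 1 => inord 0 | 1, 2 => inord 1 | _, _ => inord 2 end.
Definition gasket_glue (t : 'I_3) (x y : 'I_3) : bool :=
  match nat_of_ord t, nat_of_ord x, nat_of_ord y with
  | 0, 1, 0 => true
  | 1, 2, 1 => true
  | 2, 2, 0 => true
  | _, _, _ => false end.
Definition gasket : igs 'I_3 'I_3 :=
  {| sym := setT; edge := gasket_edge; typ := gasket_typ; glue := gasket_glue |}.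

(* Pentagonal Sierpinski carpet: S = {0..4}, types a..e = 0..4.       *)
Definition pent_edge (x y : 'I_5) : bool :=
  match nat_of_ord x, nat_of_ord y with
  | 0, 1 | 1, 2 | 2, 3 | 3, 4 | 4, 0 => true | _, _ => false end.
Definition pent_typ (x y : 'I_5) : 'I_5 :=
  match nat_of_ord x, nat_of_ord y with
  | 0, 1 => inord 0 | 1, 2 => inord 1 | 2, 3 => inord 2 | 3, 4 => inord 3
  | _, _ => inord 4 end.
Definition pent_glue (t : 'I_5) (x y : 'I_5) : bool :=
  match nat_of_ord t, nat_of_ord x, nat_of_ord y with
  | 0, 1, 0 | 0, 2, 4 => true
  | 1, 2, 1 | 1, 3, 0 => true
  | 2, 3, 2 | 2, 4, 1 => true
  | 3, 4, 3 | 3, 0, 2 => true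
  | 4, 0, 4 | 4, 1, 3 => true
  | _, _, _ => false end.
Definition pentagon : igs 'I_5 'I_5 :=
  {| sym := setT; edge := pent_edge; typ := pent_typ; glue := pent_glue |}.

(* Main.v *)
Require Import Defs.
From mathcomp Require Import all_boot zify.
Set Implicit Arguments.
Unset Strict Implicit.
Unset Printing Implicit Defensive.

Lemma path_lip (B : eqType) (e : rel B) (f : B -> nat)
  (Hf : forall x y, e x y -> f y <= f x + 1 /\ f x <= f y + 1) :
  forall p a, path e a p -> f (last a p) <= f a + size p /\ f a <= f (last a p) + size p.
Proof.
elim=> [|y p IH] a /=; first by rewrite !addn0.
case/andP=> eay /IH [h1 h2]; have [h3 h4] := Hf _ _ eay; lia.
Qed.

Section Auto.
Variables (A T Q : finType) (R : igs A T).
Variables (g : Q -> A -> bool) (tau : Q -> A -> Q) (ok : T -> Q -> Q -> nat -> bool).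

Fixpoint sr (q0 : Q) (r : seq A) : Q :=
  match r with [::] => q0 | a :: r' => tau (sr q0 r') a end.
Fixpoint hr (q0 : Q) (r : seq A) : nat :=
  match r with [::] => 0 | a :: r' => (hr q0 r').*2 + g (sr q0 r') a end.

Definition rel (d x y : nat) : bool :=
  if d == 0 then x == y else if d == 1 then y == x.+1 else x == y.+1.
Definition dcode (x y : bool) : nat := if x == y then 0 else if y then 1 else 2.
Definition gcond (d : nat) (x y : bool) : bool :=
  if d == 0 then x == y else if d == 1 then x && ~~ y else ~~ x && y.

Hypothesis Hbase : forall s a b, edge R a b ->
  ok (typ R a b) (tau s a) (tau s b) (dcode (g s a) (g s b)).
Hypothesis Hglue : forall t q1 q2 d a b, ok t q1 q2 d -> glue R t a b ->
  gcond d (g q1 a) (g q2 b) && ok t (tau q1 a) (tau q2 b) d.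

Lemma auto_inv q0 : forall w v t, rtype R w v = Some t ->
  exists d, ok t (sr q0 w) (sr q0 v) d && rel d (hr q0 w) (hr q0 v).
Proof.
elim=> [|a w IH] [|b v] t //=.
case: eqP => [<-|ne].
  case: ifP => // eab [<-].
  exists (dcode (g (sr q0 w) a) (g (sr q0 w) b)); rewrite Hbase //=.
  rewrite /rel /dcode; case: (g _ a); case: (g _ b) => /=; apply/eqP; lia.
case E: (rtype R w v) => [t'|] //; case: ifP => // gab [<-].
have [d /andP[okd reld]] := IH _ _ E.
exists d; have /andP[gc ok'] := Hglue okd gab; rewrite ok' /=.
move: gc reld; rewrite /gcond /rel.
case: (d == 0); last case: (d == 1);
case: (g _ a); case: (g _ b) => //= _ /eqP h; apply/eqP; lia.
Qed.

Lemma auto_lip q0 m w v : Gadj R m w v ->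
  hr q0 (rev v) <= hr q0 (rev w) + 1 /\ hr q0 (rev w) <= hr q0 (rev v) + 1.
Proof.
case/and3P=> _ _ /orP[]; rewrite /Gedge;
  case E: (rtype _ _ _) => [t|] // _; have [d /andP[_]] := auto_inv q0 E;
  rewrite /rel; case: (d == 0); try case: (d == 1); move=> /eqP h; lia.
Qed.

Lemma auto_low q0 (P : pred A) (Low : pred Q) : Low q0 ->
  (forall q a, Low q -> P a -> ~~ g q a && Low (tau q a)) ->
  forall r, all P r -> Low (sr q0 r) /\ hr q0 r = 0.
Proof.
move=> L0 HL; elim=> [|a r IH] //= /andP[Pa /IH [Lr hr0]].
have /andP[ng Lt] := HL _ _ Lr Pa; split=> //; rewrite hr0 (negbTE ng); done.
Qed.

Lemma auto_high q0 (P : pred A) (High : pred Q) : High q0 ->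
  (forall q a, High q -> P a -> g q a && High (tau q a)) ->
  forall r, all P r -> High (sr q0 r) /\ (hr q0 r).+1 = 2 ^ size r.
Proof.
move=> L0 HL; elim=> [|a r IH] //= /andP[Pa /IH [Lr hr0]].
have /andP[ng Lt] := HL _ _ Lr Pa; split=> //; rewrite ng expnS -hr0; lia.
Qed.

Lemma auto_bound (start : T -> Q) (Low High : T -> pred Q) :
  (forall t, Low t (start t)) -> (forall t, High t (start t)) ->
  (forall t q a, Low t q -> Iminus R t a -> ~~ g q a && Low t (tau q a)) ->
  (forall t q a, High t q -> Iplus R t a -> g q a && High t (tau q a)) ->
  dist_bound R 2.
Proof.
move=> L0 H0 HL HH t m m1 a b p.
rewrite unfold_in /Ipow => /andP[/eqP sa alla].
rewrite unfold_in /Ipow => /andP[/eqP sb allb] pth lst.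
have [_ ha] := auto_low (L0 t) (HL t) (ltac:(by rewrite all_rev) : all (Iminus R t) (rev a)).
have [_ hb] := auto_high (H0 t) (HH t) (ltac:(by rewrite all_rev) : all (Iplus R t) (rev b)).
have [h1 _] := path_lip (f := fun w => hr (start t) (rev w)) (auto_lip (start t) (m := m)) pth.
rewrite lst ha in h1; move: hb; rewrite size_rev sb => hb'.
have : 2 <= 2 ^ m by rewrite -{1}(expn1 2) leq_exp2l.
move=> H2; rewrite -hb'; move: h1 H2; rewrite -hb' add0n; move: (hr _ _) => x h h'; have hh : x <= size p := h; clear -hh h'; lia.
Qed.
End Auto.

Section CubeProof.
Variables (d L s : nat) (R : igs (csym d L s) 'I_d.+1).
Hypothesis HL : 1 < L.
Hypothesis Hanti : forall x y, edge R x y -> ~~ edge R y x.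
Hypothesis Hty : forall t, exists w v, edge R w v /\ typ R w v = t.
Hypothesis Hgl : forall t, exists w v, glue R t w v.
Hypothesis Hm2 : forall w v, edge R w v ->
  w = v \/ edge (Rcube d L s) w v \/ edge (Rcube d L s) v w.
Hypothesis Hm4 : forall w1 v1, edge R w1 v1 -> edge (Rcube d L s) w1 v1 ->
  forall w2 v2, glue R (typ R w1 v1) w2 v2 ->
    glue (Rcube d L s) (typ (Rcube d L s) w1 v1) w2 v2.
Hypothesis Hm5 : forall w1 v1, edge R w1 v1 -> edge (Rcube d L s) v1 w1 ->
  forall w2 v2, glue R (typ R w1 v1) w2 v2 ->
    glue (Rcube d L s) (typ (Rcube d L s) v1 w1) v2 w2.

Lemma ctypP (w v : csym d L s) : edge (Rcube d L s) w v -> cedge_j (ctyp w v) w v.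
Proof.
rewrite /= /ctyp; case: pickP => [j //|H] /existsP [j Hj].
by rewrite H in Hj.
Qed.

Lemma cube_pair x y a b : edge R x y -> glue R (typ R x y) a b ->
  forall k, L.-1 * cc y k + cc b k = L.-1 * cc x k + cc a k.
Proof.
move=> exy gl k; case: (Hm2 exy) => [exy'|[f|r]].
- by subst y; move: (Hanti exy); rewrite exy.
- have /= cg := Hm4 exy f gl; have ce := ctypP f.
  move: cg ce; set j := ctyp x y.
  case/and4P=> /forallP cg1 /eqP cg2 /eqP cg3 _ /andP[/forallP ce1 /eqP ce2].
  case: (eqVneq k j) => [->|kj].
    by rewrite ce2 cg2 cg3 mulnS addn0 addnC.
  by rewrite (eqP (implyP (ce1 k) kj)) (eqP (implyP (cg1 k) kj)).
- have /= cg := Hm5 exy r gl; have ce := ctypP r.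
  move: cg ce; set j := ctyp y x.
  case/and4P=> /forallP cg1 /eqP cg2 /eqP cg3 _ /andP[/forallP ce1 /eqP ce2].
  case: (eqVneq k j) => [->|kj].
    by rewrite ce2 cg2 cg3 mulnS addn0 addnC.
  by rewrite (eqP (implyP (ce1 k) kj)) (eqP (implyP (cg1 k) kj)).
Qed.

Lemma glue_cons t a b a' b' : glue R t a b -> glue R t a' b' ->
  forall k, cc a k + cc b' k = cc a' k + cc b k.
Proof.
move=> g1 g2 k; have [x [y [exy ety]]] := Hty t; subst t.
have := cube_pair exy g1 k; have := cube_pair exy g2 k; lia.
Qed.

Fixpoint Xr (k : 'I_d.+1) (r : seq (csym d L s)) : nat :=
  match r with [::] => 0 | a :: r' => cc a k + L * Xr k r' end.

Lemma cube_inv : forall w v t, rtype R w v = Some t ->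
  forall a' b', glue R t a' b' -> forall k,
    L.-1 * Xr k v + cc b' k = L.-1 * Xr k w + cc a' k.
Proof.
elim=> [|a w IH] [|b v] t //=.
case: eqP => [<-|ne].
  case: ifP => // eab [<-] a' b' gl k.
  have := cube_pair eab gl k; rewrite !mulnDr; lia.
case E: (rtype R w v) => [t'|] //; case: ifP => // gab [<-] a' b' gl k.
have E1 := IH _ _ E _ _ gab k.
have E2 := glue_cons gab gl k.
have E1L : L * (L.-1 * Xr k v + cc b k) = L * (L.-1 * Xr k w + cc a k) by rewrite E1.
have [P eL] : exists P, L = P.+1 by exists L.-1; rewrite prednK // ltnW.
move: E1L E1 E2; move: (Xr k v) (Xr k w) (cc a k) (cc b k) (cc a' k) (cc b' k) => X1 X2 ca cb ca' cb'.
rewrite eL /=; nia.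
Qed.

Lemma cc_lt (x : csym d L s) k : cc x k < L.
Proof. exact: ltn_ord. Qed.

Lemma cube_lip k m w v : Gadj R m w v ->
  Xr k (rev v) <= Xr k (rev w) + 1 /\ Xr k (rev w) <= Xr k (rev v) + 1.
Proof.
have [P eL] : exists P, L = P.+1 by exists L.-1; rewrite prednK // ltnW.
have P0 : 0 < P by move: HL; rewrite eL.
have key : forall w v t, rtype R w v = Some t ->
    Xr k v <= Xr k w + 1 /\ Xr k w <= Xr k v + 1.
  move=> w' v' t E; have [a' [b' gl]] := Hgl t.
  have := cube_inv E gl k; have := cc_lt a' k; have := cc_lt b' k.
  move: (Xr k v') (Xr k w') (cc a' k) (cc b' k) => X1 X2 ca cb.
  rewrite eL /= => hb ha e.
  have h1 : P * X1 <= P * (X2 + 1) by lia.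
  have h2 : P * X2 <= P * (X1 + 1) by lia.
  by rewrite !leq_pmul2l in h1 h2.
case/and3P=> _ _ /orP[]; rewrite /Gedge; case E: (rtype _ _ _) => [t|] // _;
  have := key _ _ _ E; lia.
Qed.

Lemma cube_dir t : exists j,
  (forall a b, glue R t a b -> cc a j = L.-1 /\ cc b j = 0) \/
  (forall a b, glue R t a b -> cc a j = 0 /\ cc b j = L.-1).
Proof.
have [x [y [exy ety]]] := Hty t; subst t.
case: (Hm2 exy) => [exy'|[f|r]].
- by subst y; move: (Hanti exy); rewrite exy.
- exists (ctyp x y); left=> a b gl; have /= := Hm4 exy f gl.
  by case/and4P=> _ /eqP -> /eqP ->.
- exists (ctyp y x); right=> a b gl; have /= := Hm5 exy r gl.
  by case/and4P=> _ /eqP -> /eqP ->.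
Qed.

Lemma Xr0 j r : all (fun x => cc x j == 0) r -> Xr j r = 0.
Proof. by elim: r => [|a r IH] //= /andP[/eqP -> /IH ->]; rewrite muln0. Qed.

Lemma XrL j r : all (fun x => cc x j == L.-1) r -> (Xr j r).+1 = L ^ size r.
Proof.
elim: r => [|a r IH] //= /andP[/eqP -> /IH e].
by rewrite expnS -e mulnS -addSn prednK // ltnW.
Qed.

Lemma cube_bound : dist_bound R L.
Proof.
move=> t m m1 a b p.
rewrite unfold_in /Ipow => /andP[/eqP sa alla].
rewrite unfold_in /Ipow => /andP[/eqP sb allb] pth lst.
have [j Hj] := cube_dir t.
have [h1 h2] := path_lip (f := fun w => Xr j (rev w)) (cube_lip j (m := m)) pth.
rewrite lst in h1 h2.
have L3 : L <= L ^ m by rewrite -{1}(expn1 L) leq_pexp2l // ltnW.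
case: Hj => Hj.
- have ha : Xr j (rev a) = 0.
    apply: Xr0; rewrite all_rev; apply/allP=> x /(allP alla) /existsP [w gw].
    by rewrite (Hj _ _ gw).2.
  have hb : (Xr j (rev b)).+1 = L ^ m.
    rewrite -sb -size_rev; apply: XrL; rewrite all_rev.
    apply/allP=> x /(allP allb) /existsP [w gw].
    by rewrite (Hj _ _ gw).1.
  move: h1 hb; rewrite ha add0n.
  move: (Xr j (rev b)) => X h hb'; have hh : X <= size p := h.
  clear -hh L3 HL hb'; lia.
- have ha : Xr j (rev b) = 0.
    apply: Xr0; rewrite all_rev; apply/allP=> x /(allP allb) /existsP [w gw].
    by rewrite (Hj _ _ gw).1.
  have hb : (Xr j (rev a)).+1 = L ^ m.
    rewrite -sa -size_rev; apply: XrL; rewrite all_rev.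
    apply/allP=> x /(allP alla) /existsP [w gw].
    by rewrite (Hj _ _ gw).2.
  move: h2 hb; rewrite ha add0n.
  move: (Xr j (rev a)) => X h hb'; have hh : X <= size p := h.
  clear -hh L3 HL hb'; lia.
Qed.
End CubeProof.

Definition o5 (n : nat) : 'I_5 := Ordinal (ltn_pmod n (isT : 0 < 5)).
Definition o3 (n : nat) : 'I_3 := Ordinal (ltn_pmod n (isT : 0 < 3)).

Lemma all5 (P : 'I_5 -> bool) : all (fun n => P (o5 n)) (iota 0 5) -> forall a, P a.
Proof.
move/allP=> H a; have := H a; rewrite mem_iota /= ltn_ord => /(_ isT).
by congr (is_true (P _)); apply: val_inj; rewrite /= modn_small.
Qed.
Lemma all3 (P : 'I_3 -> bool) : all (fun n => P (o3 n)) (iota 0 3) -> forall a, P a.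
Proof.
move/allP=> H a; have := H a; rewrite mem_iota /= ltn_ord => /(_ isT).
by congr (is_true (P _)); apply: val_inj; rewrite /= modn_small.
Qed.
Lemma allB (P : bool -> bool) : all P [:: true; false] -> forall a, P a.
Proof. by case/andP=> ? /andP[? _] []. Qed.

Definition PQ := ('I_5 * bool)%type.
Definition pT : seq nat := [:: 3; 0; 0; 2; 0].
Definition pE : seq bool := [:: true; false; false; true; false].
Definition prel (q : PQ) (a : 'I_5) : nat := (a + 5 - q.1) %% 5.
Definition pg (q : PQ) (a : 'I_5) : bool := q.2 (+) (prel q a \in [:: 1; 2]).
Definition ptau (q : PQ) (a : 'I_5) : PQ :=
  (o5 (q.1 + nth 0 pT (prel q a)), q.2 (+) nth false pE (prel q a)).
Definition penc (q : PQ) : nat := q.1 * 2 + q.2.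
Definition ptbl : seq (nat * nat * nat * nat) := [:: (0,0,0,1); (0,0,1,0); (0,0,2,1); (0,0,3,0); (0,0,6,0); (0,0,7,1); (0,1,0,0); (0,1,1,2); (0,1,2,0); (0,1,3,2); (0,1,6,2); (0,1,7,0); (0,2,4,0); (0,2,9,0); (0,3,5,0); (0,3,8,0); (0,4,0,0); (0,4,1,2); (0,4,2,0); (0,4,3,2); (0,4,6,2); (0,4,7,0); (0,5,0,1); (0,5,1,0); (0,5,2,1); (0,5,3,0); (0,5,6,0); (0,5,7,1); (0,6,0,0); (0,6,1,2); (0,6,2,0); (0,6,3,2); (0,6,6,2); (0,6,7,0); (0,7,0,1); (0,7,1,0); (0,7,2,1); (0,7,3,0); (0,7,6,0); (0,7,7,1); (0,8,5,0); (0,8,8,0); (0,9,4,0); (0,9,9,0); (1,0,0,0); (1,0,7,0); (1,1,1,0); (1,1,6,0); (1,2,2,1); (1,2,3,0); (1,2,4,1); (1,2,5,0); (1,2,8,0); (1,2,9,1); (1,3,2,0); (1,3,3,2); (1,3,4,0); (1,3,5,2); (1,3,8,2); (1,3,9,0); (1,4,1,0); (1,4,6,0); (1,5,0,0); (1,5,7,0); (1,6,2,0); (1,6,3,2); (1,6,4,0); (1,6,5,2); (1,6,8,2); (1,6,9,0); (1,7,2,1); (1,7,3,0); (1,7,4,1); (1,7,5,0); (1,7,8,0); (1,7,9,1); (1,8,2,0); (1,8,3,2); (1,8,4,0); (1,8,5,2); (1,8,8,2); (1,8,9,0); (1,9,2,1); (1,9,3,0); (1,9,4,1); (1,9,5,0);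 (1,9,8,0); (1,9,9,1); (2,0,0,2); (2,0,1,0); (2,0,4,0); (2,0,5,2); (2,0,6,0); (2,0,7,2); (2,1,0,0); (2,1,1,1); (2,1,4,1); (2,1,5,0); (2,1,6,1); (2,1,7,0); (2,2,2,0); (2,2,9,0); (2,3,3,0); (2,3,8,0); (2,4,0,0); (2,4,1,1); (2,4,4,1); (2,4,5,0); (2,4,6,1); (2,4,7,0); (2,5,0,2); (2,5,1,0); (2,5,4,0); (2,5,5,2); (2,5,6,0); (2,5,7,2); (2,6,3,0); (2,6,8,0); (2,7,2,0); (2,7,9,0); (2,8,0,2); (2,8,1,0); (2,8,4,0); (2,8,5,2); (2,8,6,0); (2,8,7,2); (2,9,0,0); (2,9,1,1); (2,9,4,1); (2,9,5,0); (2,9,6,1); (2,9,7,0); (3,0,2,2); (3,0,3,0); (3,0,6,0); (3,0,7,2); (3,0,8,0); (3,0,9,2); (3,1,2,0); (3,1,3,1); (3,1,6,1); (3,1,7,0); (3,1,8,1); (3,1,9,0); (3,2,2,2); (3,2,3,0); (3,2,6,0); (3,2,7,2); (3,2,8,0); (3,2,9,2); (3,3,2,0); (3,3,3,1); (3,3,6,1); (3,3,7,0); (3,3,8,1); (3,3,9,0); (3,4,1,0); (3,4,4,0); (3,5,0,0); (3,5,5,0); (3,6,2,0); (3,6,3,1); (3,6,6,1); (3,6,7,0); (3,6,8,1); (3,6,9,0); (3,7,2,2); (3,7,3,0); (3,7,6,0); (3,7,7,2); (3,7,8,0); (3,7,9,2); (3,8,0,0); (3,8,5,0); (3,9,1,0);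 (3,9,4,0); (4,0,2,0); (4,0,7,0); (4,1,3,0); (4,1,6,0); (4,2,0,0); (4,2,1,2); (4,2,4,2); (4,2,5,0); (4,2,8,0); (4,2,9,2); (4,3,0,1); (4,3,1,0); (4,3,4,0); (4,3,5,1); (4,3,8,1); (4,3,9,0); (4,4,0,0); (4,4,1,2); (4,4,4,2); (4,4,5,0); (4,4,8,0); (4,4,9,2); (4,5,0,1); (4,5,1,0); (4,5,4,0); (4,5,5,1); (4,5,8,1); (4,5,9,0); (4,6,3,0); (4,6,6,0); (4,7,2,0); (4,7,7,0); (4,8,0,1); (4,8,1,0); (4,8,4,0); (4,8,5,1); (4,8,8,1); (4,8,9,0); (4,9,0,0); (4,9,1,2); (4,9,4,2); (4,9,5,0); (4,9,8,0); (4,9,9,2) ].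
Definition pokn (t : nat) (q1 q2 : PQ) (d : nat) : bool :=
  (t, penc q1, penc q2, d) \in ptbl.
Definition pok (t : 'I_5) (q1 q2 : PQ) (d : nat) : bool := pokn t q1 q2 d.
Definition ptyn (x y : 'I_5) : nat :=
  match nat_of_ord x, nat_of_ord y with
  | 0, 1 => 0 | 1, 2 => 1 | 2, 3 => 2 | 3, 4 => 3 | _, _ => 4 end.
Lemma ptynE x y : nat_of_ord (pent_typ x y) = ptyn x y.
Proof.
rewrite /pent_typ /ptyn.
by case: (nat_of_ord x) => [|[|[|[|n]]]]; case: (nat_of_ord y) => [|[|[|[|[|m]]]]]; rewrite inordK.
Qed.
Definition pLow (t : 'I_5) : pred PQ :=
  fun q => ((q.1 == t) && ~~ q.2) || ((nat_of_ord q.1 == (t + 3) %% 5) && q.2).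
Definition pHigh (t : 'I_5) : pred PQ := fun q => (q.1 == t) && ~~ q.2.

Lemma ptbl_d : all (fun x => x.2 < 3) ptbl. Proof. by vm_compute. Qed.

Definition allQ (P : PQ -> bool) := all (fun n => all (fun e => P (o5 n, e)) [:: true; false]) (iota 0 5).
Lemma allQP P : allQ P -> forall q, P q.
Proof.
move=> H [x e].
have: all (fun n => P (o5 n, true) && P (o5 n, false)) (iota 0 5).
  by apply/allP=> n nin; move/allP: H => /(_ n nin) /=; rewrite andbT.
move/(all5 (P := fun x => P (x, true) && P (x, false))) => /(_ x) /andP[].
by case: e.
Qed.
Definition all5b (P : 'I_5 -> bool) := all (fun n => P (o5 n)) (iota 0 5).
Lemma all5P (P : 'I_5 -> bool) : all5b P -> forall a, P a.
Proof. exact: all5. Qed.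

Lemma pbase_check : allQ (fun s => all5b (fun a => all5b (fun b =>
  pent_edge a b ==> pokn (ptyn a b) (ptau s a) (ptau s b) (dcode (pg s a) (pg s b))))).
Proof. by vm_compute. Qed.

Lemma pglue_check : all5b (fun t => allQ (fun q1 => allQ (fun q2 => all (fun d =>
  pok t q1 q2 d ==> all5b (fun a => all5b (fun b => pent_glue t a b ==>
     gcond d (pg q1 a) (pg q2 b) && pok t (ptau q1 a) (ptau q2 b) d))) (iota 0 3)))).
Proof. by vm_compute. Qed.

Lemma plow_check : all5b (fun t => allQ (fun q => all5b (fun w => all5b (fun a =>
  pLow t q ==> pent_glue t w a ==> ~~ pg q a && pLow t (ptau q a))))).
Proof. by vm_compute. Qed.

Lemma phigh_check : all5b (fun t => allQ (fun q => all5b (fun a => all5b (fun w =>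
  pHigh t q ==> pent_glue t a w ==> pg q a && pHigh t (ptau q a))))).
Proof. by vm_compute. Qed.

Lemma pent_bound : dist_bound pentagon 2.
Proof.
apply: (@auto_bound _ _ _ pentagon pg ptau pok _ _ (fun t => (t, false)) pLow pHigh).
- move=> s a b /= eab.
  have := allQP pbase_check s => /all5P /(_ a) /all5P /(_ b).
  by rewrite eab /pok ptynE.
- move=> t q1 q2 d a b okd gab.
  have d3 : d < 3 by move: okd; rewrite /pok /pokn => /(allP ptbl_d).
  have := all5P pglue_check t => /allQP /(_ q1) /allQP /(_ q2) /allP /(_ d).
  rewrite mem_iota d3 okd => /(_ isT) /= /all5P /(_ a) /all5P /(_ b).
  by move: gab => /= ->.
- by move=> t; rewrite /pLow eqxx.
- by move=> t; rewrite /pHigh eqxx.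
- move=> t q a Lq /existsP [w gw].
  have := all5P plow_check t => /allQP /(_ q) /all5P /(_ w) /all5P /(_ a).
  by move: gw => /= ->; rewrite Lq.
- move=> t q a Lq /existsP [w gw].
  have := all5P phigh_check t => /allQP /(_ q) /all5P /(_ a) /all5P /(_ w).
  by move: gw => /= ->; rewrite Lq.
Qed.

Definition gtbl : seq (nat * nat * nat * nat) := [:: (0,0,0,1); (0,0,1,1); (0,0,2,1); (0,1,0,0); (0,1,1,0); (0,1,2,0); (0,2,0,0); (0,2,1,0); (0,2,2,0); (1,0,0,2); (1,0,1,0); (1,0,2,0); (1,1,0,0); (1,1,1,1); (1,1,2,1); (1,2,0,0); (1,2,1,1); (1,2,2,1); (2,0,0,0); (2,0,1,0); (2,0,2,0); (2,1,0,1); (2,1,1,1); (2,1,2,1); (2,2,0,1); (2,2,1,1); (2,2,2,1) ].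
Definition all3b (P : 'I_3 -> bool) := all (fun n => P (o3 n)) (iota 0 3).
Lemma all3P (P : 'I_3 -> bool) : all3b P -> forall a, P a.
Proof. exact: all3. Qed.
Definition gg (q a : 'I_3) : bool := nat_of_ord a == nth 0 [:: 1; 2; 2] q.
Definition gtau (q a : 'I_3) : 'I_3 := q.
Definition gokn (t : nat) (q1 q2 : 'I_3) (d : nat) : bool :=
  (t, nat_of_ord q1, nat_of_ord q2, d) \in gtbl.
Definition gok (t : 'I_3) (q1 q2 : 'I_3) (d : nat) : bool := gokn t q1 q2 d.
Definition gtyn (x y : 'I_3) : nat :=
  match nat_of_ord x, nat_of_ord y with
  | 0, 1 => 0 | 1, 2 => 1 | _, _ => 2 end.
Lemma gtynE x y : nat_of_ord (gasket_typ x y) = gtyn x y.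
Proof.
rewrite /gasket_typ /gtyn.
by case: (nat_of_ord x) => [|[|n]]; case: (nat_of_ord y) => [|[|[|m]]]; rewrite inordK.
Qed.
Lemma gtbl_d : all (fun x => x.2 < 3) gtbl. Proof. by vm_compute. Qed.

Lemma gbase_check : all3b (fun s => all3b (fun a => all3b (fun b =>
  gasket_edge a b ==> gokn (gtyn a b) (gtau s a) (gtau s b) (dcode (gg s a) (gg s b))))).
Proof. by vm_compute. Qed.

Lemma gglue_check : all3b (fun t => all3b (fun q1 => all3b (fun q2 => all (fun d =>
  gok t q1 q2 d ==> all3b (fun a => all3b (fun b => gasket_glue t a b ==>
     gcond d (gg q1 a) (gg q2 b) && gok t (gtau q1 a) (gtau q2 b) d))) (iota 0 3)))).
Proof. by vm_compute. Qed.

Lemma glow_check : all3b (fun t => all3b (fun w => all3b (fun a =>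
  gasket_glue t w a ==> ~~ gg t a))).
Proof. by vm_compute. Qed.

Lemma ghigh_check : all3b (fun t => all3b (fun a => all3b (fun w =>
  gasket_glue t a w ==> gg t a))).
Proof. by vm_compute. Qed.

Lemma gasket_bound : dist_bound gasket 2.
Proof.
apply: (@auto_bound _ _ _ gasket gg gtau gok _ _ id (fun t q => q == t) (fun t q => q == t)).
- move=> s a b /= eab.
  have := all3P gbase_check s => /all3P /(_ a) /all3P /(_ b).
  by rewrite eab /gok gtynE.
- move=> t q1 q2 d a b okd gab.
  have d3 : d < 3 by move: okd; rewrite /gok /gokn => /(allP gtbl_d).
  have := all3P gglue_check t => /all3P /(_ q1) /all3P /(_ q2) /allP /(_ d).
  rewrite mem_iota d3 okd => /(_ isT) /= /all3P /(_ a) /all3P /(_ b).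
  by move: gab => /= ->.
- by move=> t /=.
- by move=> t /=.
- move=> t q a /eqP -> /existsP [w gw].
  have := all3P glow_check t => /all3P /(_ w) /all3P /(_ a).
  by move: gw => /= -> /= ->; rewrite /gtau eqxx.
- move=> t q a /eqP -> /existsP [w gw].
  have := all3P ghigh_check t => /all3P /(_ a) /all3P /(_ w).
  by move: gw => /= -> /= ->; rewrite /gtau eqxx.
Qed.

Theorem proposition5p20 :
  (forall (d L s : nat), 3 <= L ->
     forall R : igs (csym d L s) 'I_d.+1,
       cubical R -> dist_bound R L)
  /\ dist_bound gasket 2
  /\ dist_bound pentagon 2.
Proof.
split.
  move=> d L s L3 R [[Higs [_ Hmap]] _ _ _ _].
  case: Higs => _ [_ [_ Hanti]] _ Hty Hgl.
  case: Hmap => _ m2 _ m4 m5.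
  apply: cube_bound; try done; exact: ltnW L3.
split; [exact: gasket_bound | exact: pent_bound].
Qed.
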